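(* Let $\mathbf A\in\mathbb C^{n\times n}$ with $\operatorname{Ind}\mathbf A=k_1$ and $\operatorname{rank}\mathbf A^{k_1+1}=\operatorname{rank}\mathbf A^{k_1}=r_1\le n$, let $\mathbf B\in\mathbb C^{m\times m}$ with $\operatorname{Ind}\mathbf B=k_2$ and $\operatorname{rank}\mathbf B^{k_2+1}=\operatorname{rank}\mathbf B^{k_2}=r_2\le m$, let $\mathbf D\in\mathbb C^{n\times m}$, and let $\tilde{\mathbf D}=\mathbf A^{k_1}\mathbf D\mathbf B^{k_2}$ with $l$-th row $\tilde{\mathbf d}_{l.}$ and $t$-th column $\tilde{\mathbf d}_{.t}$. For $i=1,\dots,n$, $j=1,\dots,m$ define the column vector $\mathbf d^{\mathbf B}_{.j}\in\mathbb C^{n}$ with $l$-th entry $\sum_{\alpha\in I_{r_2,m}\{j\}}\left|\left(\mathbf B^{k_2+1}_{j.}(\tilde{\mathbf d}_{l.})\right)^{\alpha}_{\alpha}\right|$ and the row vector $\mathbf d^{\mathbf A}_{i.}\in\mathbb C^{1\times m}$ with $t$-th entry $\sum_{\beta\in J_{r_1,n}\{i\}}\left|\left(\mathbf A^{k_1+1}_{.i}(\tilde{\mathbf d}_{.t})\right)^{\beta}_{\beta}\right|$. Then the Drazin inverse solution $\mathbf X=\mathbf A^{D}\mathbf D\mathbf B^{D}=(x_{ij})\in\mathbb C^{n\times m}$ of $\mathbf A\mathbf X\mathbf B=\mathbf D$ satisfies, for all $i,j$, \[x_{ij}=\frac{\sum_{\beta\in J_{r_1,n}\{i\}}\left|\left(\mathbf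 A^{k_1+1}_{.i}(\mathbf d^{\mathbf B}_{.j})\right)^{\beta}_{\beta}\right|}{\sum_{\beta\in J_{r_1,n}}\left|(\mathbf A^{k_1+1})^{\beta}_{\beta}\right|\sum_{\alpha\in I_{r_2,m}}\left|(\mathbf B^{k_2+1})^{\alpha}_{\alpha}\right|} =\frac{\sum_{\alpha\in I_{r_2,m}\{j\}}\left|\left(\mathbf B^{k_2+1}_{j.}(\mathbf d^{\mathbf A}_{i.})\right)^{\alpha}_{\alpha}\right|}{\sum_{\beta\in J_{r_1,n}}\left|(\mathbf A^{k_1+1})^{\beta}_{\beta}\right|\sum_{\alpha\in I_{r_2,m}}\left|(\mathbf B^{k_2+1})^{\alpha}_{\alpha}\right|}.\]
   Context: For a square $\mathbf M$, $\operatorname{Ind}\mathbf M$ is the smallest nonnegative $k$ with $\operatorname{rank}\mathbf M^{k+1}=\operatorname{rank}\mathbf M^{k}$; the Drazin inverse $\mathbf M^{D}$ is the unique $\mathbf X$ with $\mathbf M^{k+1}\mathbf X=\mathbf M^{k}$, $\mathbf X\mathbf M\mathbf X=\mathbf X$, $\mathbf M\mathbf X=\mathbf X\mathbf M$, $k=\operatorname{Ind}\mathbf M$. $\mathbf M_{.i}(\mathbf c)$ (resp. $\mathbf M_{j.}(\mathbf c)$) is obtained by replacing the $i$-th column (resp. $j$-th row) of $\mathbf M$ by $\mathbf c$. For $1\le k\le s$, $L_{k,s}$ is the set of strictly increasing sequences of $k$ elements of $\{1,\dots,s\}$; $I_{k,s}=J_{k,s}=L_{k,s}$, $I_{k,s}\{i\}=J_{k,s}\{i\}=\{\alpha\in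 L_{k,s}:i\in\alpha\}$; $\mathbf M^{\alpha}_{\alpha}$ is the principal submatrix indexed by $\alpha$; $|\cdot|$ is the determinant. *)

(* Defs.v *)
(* Complex numbers: an arbitrary numClosedFieldType C
   (mathcomp's abstraction of the complex numbers; instances: algC, R[i]). *)
From HB Require Import structures.
From mathcomp Require Import all_boot all_order all_algebra.
From Stdlib Require Import ClassicalEpsilon.
Set Implicit Arguments. Unset Strict Implicit. Unset Printing Implicit Defensive.
Import Order.TTheory GRing.Theory Num.Theory.
Local Open Scope ring_scope.

Definition mx_index (R : fieldType) (n : nat) (M : 'M[R]_n) (k : nat) : Prop :=
  \rank (M ^+ k.+1) = \rank (M ^+ k) /\
  (forall j : nat, (j < k)%N -> \rank (M ^+ j.+1) <> \rank (M ^+ j)).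

Definition drazin_spec (R : fieldType) (n : nat) (M X : 'M[R]_n) : Prop :=
  exists k : nat, mx_index M k /\
    M ^+ k.+1 *m X = M ^+ k /\ X *m M *m X = X /\ M *m X = X *m M.

Definition drazin (R : fieldType) (n : nat) (M : 'M[R]_n) : 'M[R]_n :=
  epsilon (inhabits 0) (fun X => drazin_spec M X).

Definition colrep (R : fieldType) (n : nat) (M : 'M[R]_n) (i : 'I_n) (c : 'cV[R]_n)
  : 'M[R]_n := \matrix_(p, q) (if q == i then c p 0 else M p q).

Definition rowrep (R : fieldType) (n : nat) (M : 'M[R]_n) (j : 'I_n) (c : 'rV[R]_n)
  : 'M[R]_n := \matrix_(p, q) (if p == j then c 0 q else M p q).

(* |M^a_a| : the principal minor of M indexed by a (a strictly increasing
   sequence of indices is represented by the set of its elements, enumerated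
   in increasing order). *)
Definition pminor (R : fieldType) (n : nat) (M : 'M[R]_n) (a : {set 'I_n}) : R :=
  \det (mxsub (fun p : 'I_#|a| => enum_val p) (fun q : 'I_#|a| => enum_val q) M).

(* Main.v *)
Require Import Defs.
From HB Require Import structures.
From mathcomp Require Import all_boot all_order all_algebra all_fingroup.
From Stdlib Require Import ClassicalEpsilon.
Set Implicit Arguments. Unset Strict Implicit. Unset Printing Implicit Defensive.
Import Order.TTheory GRing.Theory Num.Theory.
Local Open Scope ring_scope.

Lemma det_mul_expand (R : comPzRingType) r n (Q : 'M[R]_(r,n)) (P : 'M[R]_(n,r)) :
  \det (Q *m P) = \sum_(g : {ffun 'I_r -> 'I_n}) (\prod_a Q a (g a)) * \det (rowsub g P).
Proof.
rewrite /(\det (Q *m P)).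
transitivity (\sum_(s : 'S_r) \sum_(g : {ffun 'I_r -> 'I_n})
   (-1) ^+ s * \prod_a (Q a (g a) * P (g a) (s a))).
  apply: eq_bigr => s _.
  rewrite (eq_bigr (fun a => \sum_l Q a l * P l (s a))); last by move=> a _; rewrite mxE.
  by rewrite bigA_distr_bigA big_distrr.
rewrite exchange_big /=; apply: eq_bigr => g _.
rewrite /(\det (rowsub g P)) big_distrr /=; apply: eq_bigr => s _.
rewrite mulrCA; congr (_ * _); rewrite -big_split /=.
by apply: eq_bigr => a _; rewrite mxE.
Qed.

Lemma pminor_cast (R : fieldType) n m r (h : m = r) (f : 'I_m -> 'I_n) (M : 'M[R]_n) :
  \det (mxsub f f M) = \det (mxsub (f \o cast_ord (esym h)) (f \o cast_ord (esym h)) M).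
Proof.
subst r; congr (\det _); apply/matrixP => i j; rewrite !mxE /=.
by rewrite !cast_ord_id.
Qed.

Lemma cauchy_binet (R : fieldType) r n (Q : 'M[R]_(r,n)) (P : 'M[R]_(n,r)) :
  \det (Q *m P) = \sum_(b : {set 'I_n} | #|b| == r) pminor (P *m Q) b.
Proof.
rewrite det_mul_expand.
rewrite (bigID (fun g : {ffun 'I_r -> 'I_n} => injectiveb g)) /=.
rewrite [X in _ + X]big1 ?addr0; last first.
  move=> g /injectivePn [a1 [a2 na g12]].
  rewrite (determinant_alternate na) ?mulr0 // => j.
  by rewrite !mxE g12.
rewrite (partition_big (fun g : {ffun 'I_r -> 'I_n} => [set g x | x in 'I_r])
          (fun b => #|b| == r)) /=; last first.
  move=> g /injectiveP gi; by rewrite card_imset // card_ord.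
apply: eq_bigr => b /eqP hb.
pose e : 'I_r -> 'I_n := fun a => enum_val (cast_ord (esym hb) a).
have einj : injective e.
  by move=> x y /enum_val_inj /cast_ord_inj.
have he : forall x, x \in b -> exists a, e a = x.
  move=> x xb; exists (cast_ord hb (enum_rank_in xb x)).
  by rewrite /e cast_ordK enum_rankK_in.
rewrite /pminor (pminor_cast hb) -/e.
rewrite mxsub_mul det_mulmx mulrC.
pose h : 'S_r -> {ffun 'I_r -> 'I_n} := fun s => [ffun a => e (s a)].
have hinj : injective h.
  move=> s1 s2 /ffunP E; apply/permP => a; apply: einj.
  by have := E a; rewrite !ffunE.
have hP : forall s, injectiveb (h s) && ([set h s x | x in 'I_r] == b).
  move=> s; apply/andP; split.
    by apply/injectiveP => x y; rewrite !ffunE => /einj /perm_inj.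
  apply/eqP/setP => x; apply/imsetP/idP.
    by move=> [a _ ->]; rewrite ffunE /e enum_valP.
  move=> /he [a <-]; exists ((s^-1)%g a) => //.
  by rewrite ffunE permKV.
rewrite (reindex h); last first.
  exists (fun g => odflt 1%g [pick s | h s == g]).
    move=> s _; case: pickP => [s' /eqP /hinj //| /(_ s)]; by rewrite eqxx.
  move=> g; rewrite inE => /andP [/injectiveP gi /eqP gb].
  have hg : forall a, g a \in b.
    by move=> a; rewrite -gb; apply: imset_f.
  have [f ef] : exists f : 'I_r -> 'I_r, forall a, e (f a) = g a.
    exists (fun a => cast_ord hb (enum_rank_in (hg a) (g a))) => a.
    by rewrite /e cast_ordK enum_rankK_in.
  have finj : injective f by move=> x y E; apply: gi; rewrite -!ef E.
  have -> : g = h (perm finj).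
    by apply/ffunP => a; rewrite ffunE permE ef.
  case: pickP => [s' /eqP //| /(_ (perm finj))]; by rewrite eqxx.
rewrite (eq_bigl (fun _ => true)); last by move=> s; rewrite hP.
rewrite /(\det (colsub e Q)) big_distrl /=.
apply: eq_bigr => s _.
have -> : rowsub (h s) P = row_perm s (rowsub e P).
  by apply/matrixP => i j; rewrite !mxE ffunE.
rewrite row_permE det_mulmx det_perm mulrA; congr (_ * _); rewrite mulrC.
congr (_ * _); apply: eq_bigr => a _; by rewrite ffunE mxE.
Qed.

Definition colrepR (R : fieldType) r n (Q : 'M[R]_(r, n)) (i : 'I_n) (w : 'cV[R]_r)
  : 'M[R]_(r, n) := \matrix_(p, q) (if q == i then w p 0 else Q p q).
Definition rowrepR (R : fieldType) r n (Q : 'M[R]_(r, n)) (p : 'I_r) (u : 'rV[R]_n)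
  : 'M[R]_(r, n) := \matrix_(a, q) (if a == p then u 0 q else Q a q).

Lemma cofactor_eq (R : fieldType) n (A B : 'M[R]_n) i j :
  (forall a c, a != i -> c != j -> A a c = B a c) -> cofactor A i j = cofactor B i j.
Proof.
move=> E; rewrite /cofactor; congr (_ * _); congr (\det _).
by apply/matrixP => a c; rewrite !mxE E // eq_sym neq_lift.
Qed.

Lemma pminor_mul (R : fieldType) r n (P : 'M[R]_(n, r)) (b : {set 'I_n}) :
  #|b| = r -> exists e : 'I_r -> 'I_n,
    [/\ injective e, (forall x, x \in b -> exists a, e a = x), (forall a, e a \in b) &
    forall X : 'M[R]_(r, n), pminor (P *m X) b = \det (rowsub e P) * \det (colsub e X)].
Proof.
move=> hb.
pose e : 'I_r -> 'I_n := fun a => enum_val (cast_ord (esym hb) a).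
exists e; split.
- by move=> x y /enum_val_inj /cast_ord_inj.
- move=> x xb; exists (cast_ord hb (enum_rank_in xb x)).
  by rewrite /e cast_ordK enum_rankK_in.
- by move=> a; rewrite /e enum_valP.
- move=> X; rewrite /pminor (pminor_cast hb) -/e.
  by rewrite mxsub_mul det_mulmx.
Qed.

Lemma lemF (R : fieldType) r n (P : 'M[R]_(n, r)) (Q : 'M[R]_(r, n)) (i : 'I_n) (w : 'cV[R]_r) :
  \sum_(b : {set 'I_n} | (#|b| == r) && (i \in b)) pminor (colrep (P *m Q) i (P *m w)) b
  = (P *m \adj (Q *m P) *m w) i 0.
Proof.
pose ei : 'rV[R]_n := \row_q (q == i)%:R.
have HR : (P *m \adj (Q *m P) *m w) i 0 =
   \sum_p w p 0 * \sum_(b : {set 'I_n} | #|b| == r) pminor (P *m rowrepR Q p ei) b.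
  rewrite mxE; apply: eq_bigr => p _; rewrite mulrC; congr (_ * _).
  rewrite -cauchy_binet.
  rewrite (expand_det_row _ p) mxE; apply: eq_bigr => q _.
  rewrite [\adj _ _ _]mxE; congr (_ * _).
    rewrite mxE (bigD1 i) //= !mxE !eqxx mul1r big1 ?addr0 // => l /negPf li; by rewrite !mxE eqxx li mul0r.
  apply: cofactor_eq => a c ap _; rewrite !mxE.
  by apply: eq_bigr => l _; rewrite mxE (negPf ap).
rewrite HR; under [RHS]eq_bigr do rewrite big_distrr /=.
rewrite exchange_big /= big_mkcondr /=.
apply: eq_bigr => b /eqP hb.
have [e [einj esurj eb pm]] := pminor_mul P hb.
have -> : colrep (P *m Q) i (P *m w) = P *m colrepR Q i w.
  apply/matrixP => a c; rewrite !mxE; case: (c =P i) => [->|/eqP ci]; apply: eq_bigr => l _; by rewrite mxE ?eqxx ?(negPf ci).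
under [RHS]eq_bigr do rewrite pm mulrCA.
rewrite -big_distrr pm /=; case: ifP => ib; last first.
  rewrite big1 ?mulr0 // => p _.
  rewrite (expand_det_row _ p) big1 ?mulr0 // => q _.
  rewrite !mxE eqxx; case: eqP => [eqi|]; last by rewrite mul0r.
  by move: ib; rewrite -eqi eb.
congr (_ * _).
have [q0 eq0] := esurj i ib.
rewrite (expand_det_col _ q0); apply: eq_bigr => p _.
rewrite !mxE eq0 eqxx; congr (_ * _).
rewrite [RHS](expand_det_row _ p) (bigD1 q0) //= big1 ?addr0; last first.
  move=> q qq0; rewrite !mxE eqxx -eq0 (inj_eq einj) (negPf qq0) mul0r //.
rewrite !mxE eqxx eq0 eqxx mul1r.
apply: cofactor_eq => a c ap cq; rewrite !mxE (negPf ap) -eq0 (inj_eq einj).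
by rewrite (negPf cq).
Qed.

Lemma pminor_tr (R : fieldType) n (M : 'M[R]_n) b : pminor M^T b = pminor M b.
Proof. by rewrite /pminor -det_tr trmx_mxsub trmxK. Qed.

Lemma rowrep_tr (R : fieldType) n (M : 'M[R]_n) j (c : 'rV[R]_n) :
  rowrep M j c = (colrep M^T j c^T)^T.
Proof. by apply/matrixP => a q; rewrite !mxE. Qed.

Lemma lemFr (R : fieldType) r n (P : 'M[R]_(n, r)) (Q : 'M[R]_(r, n)) (j : 'I_n) (u : 'rV[R]_r) :
  \sum_(b : {set 'I_n} | (#|b| == r) && (j \in b)) pminor (rowrep (P *m Q) j (u *m Q)) b
  = (u *m \adj (Q *m P) *m Q) 0 j.
Proof.
under eq_bigr do rewrite rowrep_tr pminor_tr !trmx_mul.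
rewrite lemF -trmx_mul -trmx_adj -!trmx_mul mxE.
by rewrite mulmxA.
Qed.
Lemma index_W (R : fieldType) n (A : 'M[R]_n) k :
  mx_index A k -> exists W : 'M[R]_n, A ^+ k = W *m A ^+ k.+1.
Proof.
move=> [hr _].
have sub : (A ^+ k.+1 <= A ^+ k)%MS by rewrite exprS -mulmxE submxMl.
have := mxrank_leqif_sup sub; case=> _; rewrite hr eqxx => /esym /submxP.
by [].
Qed.

Lemma index_W2 (R : fieldType) n (A : 'M[R]_n) k (W : 'M[R]_n) :
  A ^+ k = W *m A ^+ k.+1 -> A ^+ k.+1 = W ^+ k.+1 *m (A ^+ k.+1 *m A ^+ k.+1).
Proof.
rewrite !mulmxE => hW.
have gen : forall j, A ^+ k = W ^+ j * A ^+ (k + j).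
  elim=> [|j IH]; first by rewrite expr0 mul1r addn0.
  rewrite IH exprD hW -mulrA -exprD mulrA -exprSr; congr (_ * _).
  by rewrite addSn addnS.
by rewrite -exprD exprSr (gen k.+1) -mulrA -exprSr addSn.
Qed.

Lemma index_unit (R : fieldType) n (A : 'M[R]_n) k :
  mx_index A k -> (row_base (A ^+ k.+1) *m col_base (A ^+ k.+1)) \in unitmx.
Proof.
move=> hk; have [W hW] := index_W hk.
have hM := index_W2 hW.
set M := A ^+ k.+1 in hM *; set Z := W ^+ k.+1 in hM.
move: (col_base M) (row_base M) (mulmx_base M) (row_base_free M) (col_base_full M).
move: (\rank M) => r P Q hPQ Qfree Pfull.
have [Qr hQ] := row_freeP Qfree.
have [Pl hP] := row_fullP Pfull.
have eP : P = Z *m P *m (Q *m P).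
  have e1 : P = M *m Qr by rewrite -hPQ -mulmxA hQ mulmx1.
  by rewrite {1}e1 hM -hPQ !mulmxA -(mulmxA _ Q Qr) hQ mulmx1.
have : (Pl *m Z *m P) *m (Q *m P) = 1%:M by rewrite -!mulmxA (mulmxA Z) -eP.
by case/mulmx1_unit.
Qed.

Lemma comm_powm (R : fieldType) n (A E : 'M[R]_n) j :
  A *m E = E *m A -> A ^+ j *m E = E *m A ^+ j.
Proof.
rewrite !mulmxE => h.
have c : GRing.comm E A by [].
by have := commrX j c.
Qed.

Lemma drazin_exists (R : fieldType) n (A : 'M[R]_n) k :
  mx_index A k -> exists X, drazin_spec A X.
Proof.
move=> hk; have hU := index_unit hk; have [W hW] := index_W hk.
move: hW hU; set M := A ^+ k.+1 => hW.
move: (col_base M) (row_base M) (mulmx_base M).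
move: (\rank M) => r P Q hPQ hU.
set Yi := invmx (Q *m P).
have YYi : (Q *m P) *m Yi = 1%:M by apply: mulmxV.
have YiY : Yi *m (Q *m P) = 1%:M by apply: mulVmx.
pose G := P *m (Yi *m Yi) *m Q; pose E := P *m Yi *m Q.
have hMG : M *m G = E.
  by rewrite -hPQ /G /E !mulmxA -(mulmxA P Q P) -(mulmxA P (Q *m P)) YYi mulmx1.
have hGM : G *m M = E.
  by rewrite -hPQ /G /E -!mulmxA (mulmxA Q P Q) (mulmxA Yi (Q *m P)) YiY mul1mx.
have hME : M *m E = M.
  by rewrite -hPQ /E !mulmxA -(mulmxA P Q P) -(mulmxA P (Q *m P)) YYi mulmx1.
have hEM : E *m M = M.
  by rewrite -hPQ /E -!mulmxA (mulmxA Q P Q) (mulmxA Yi (Q *m P)) YiY mul1mx.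
have hGE : G *m E = G.
  by rewrite /G /E -!mulmxA (mulmxA Q P (Yi *m Q)) (mulmxA Yi (Q *m P)) YiY mul1mx.
have hEG : E *m G = G.
  by rewrite /G /E -!mulmxA (mulmxA Q P) (mulmxA Yi (Q *m P)) YiY mul1mx.
have hAM : A *m M = M *m A.
  by rewrite /M !mulmxE -exprS exprSr.
clearbody G E.
have hAE : A *m E = E *m A.
  have k1 : (1%:M - E) *m M = 0 by rewrite mulmxBl mul1mx hEM subrr.
  have k2 : M *m (1%:M - E) = 0 by rewrite mulmxBr mulmx1 hME subrr.
  have h1 : (1%:M - E) *m A *m E = 0.
    by rewrite -{2}hMG !mulmxA -(mulmxA _ A M) hAM mulmxA k1 !mul0mx.
  have h2 : E *m A *m (1%:M - E) = 0.
    by rewrite -{1}hGM -!mulmxA (mulmxA M A) -hAM -mulmxA k2 !mulmx0.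
  have e1 : A *m E = E *m A *m E by apply/eqP; rewrite -subr_eq0 -h1 !mulmxBl mul1mx.
  have e2 : E *m A = E *m A *m E by apply/eqP; rewrite -subr_eq0 -h2 mulmxBr mulmx1.
  by rewrite e1 -e2.
have hAG : A *m G = G *m A.
  have e1 : G *m A = G *m A *m E by rewrite -mulmxA hAE mulmxA hGE.
  have e2 : A *m G = E *m A *m G by rewrite -hAE -mulmxA hEG.
  by rewrite e1 e2 -hGM -(mulmxA G M A) -hAM -!mulmxA hMG hGM.
exists (G *m A ^+ k); exists k; split => //; split; [|split].
- rewrite mulmxA hMG -comm_powm //.
  by rewrite hW -mulmxA hME.
- rewrite -!mulmxA (mulmxA (A ^+ k)) mulmxE -exprSr -mulmxE -/M.
  by rewrite (mulmxA M) hMG mulmxA hGE.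
- rewrite mulmxA hAG -!mulmxA; congr (_ *m _).
  by rewrite !mulmxE -exprS exprSr.
Qed.

Lemma index_uniq (R : fieldType) n (A : 'M[R]_n) k k' :
  mx_index A k -> mx_index A k' -> k = k'.
Proof.
move=> [h1 h2] [h1' h2']; case: (ltngtP k k') => // lt.
- by have := h2' _ lt; rewrite h1.
- by have := h2 _ lt; rewrite h1'.
Qed.

Lemma drazin_props (R : fieldType) n (A : 'M[R]_n) k :
  mx_index A k ->
  [/\ A ^+ k.+1 *m drazin A = A ^+ k, drazin A *m A *m drazin A = drazin A
    & A *m drazin A = drazin A *m A].
Proof.
move=> hk.
have hs : drazin_spec A (drazin A) :=
  epsilon_spec (inhabits (0 : 'M[R]_n)) (drazin_spec A) (drazin_exists hk).
move: hs => [k' [hk' [h1 [h2 h3]]]].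
by have := index_uniq hk hk'; move=> ?; subst k'.
Qed.

Lemma side (R : fieldType) n (A : 'M[R]_n) k (hk : mx_index A k) :
  exists r (P : 'M[R]_(n, r)) (Q : 'M[R]_(r, n)),
   [/\ A ^+ k.+1 = P *m Q, \rank (A ^+ k.+1) = r, \det (Q *m P) != 0,
       A ^+ k = P *m Q *m drazin A & [/\ A ^+ k = drazin A *m P *m Q,
       P *m \adj (Q *m P) *m Q *m drazin A = \det (Q *m P) *: drazin A &
       drazin A *m P *m \adj (Q *m P) *m Q = \det (Q *m P) *: drazin A]].
Proof.
have [h1 h2 h3] := drazin_props hk.
have hU := index_unit hk.
set X := drazin A in h1 h2 h3 *.
set M := A ^+ k.+1 in h1 hU *.
have hXM : X *m M = M *m X by rewrite /M -comm_powm.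
have hXA : GRing.comm X A by rewrite /GRing.comm -!mulmxE.
have hAXi : forall j, (A * X) ^+ j.+1 = A * X.
  elim=> [|j IH]; first by rewrite expr1.
  by rewrite exprS IH -mulrA (mulrA X A X) -!mulmxE h2.
have hZ : X = M *m X ^+ k.+2.
  rewrite /M mulmxE (exprSr X k.+1) mulrA -exprMn_comm; last exact: (esym hXA).
  by rewrite hAXi -hXA -!mulmxE h2.
have hZ' : X = X ^+ k.+2 *m M.
  rewrite {1}hZ !mulmxE; apply: commrX.
  by apply/esym/commrX; rewrite /GRing.comm -!mulmxE.
move: (X ^+ k.+2) hZ hZ' => Z hZ hZ'.
exists (\rank M), (col_base M), (row_base M).
have e1 : A ^+ k = M *m X by rewrite h1.
have e2 : A ^+ k = X *m M by rewrite hXM h1.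
move: (col_base M) (row_base M) (mulmx_base M) hU.
move: (\rank M) => r P Q hPQ hU.
split => //.
- by rewrite -unitfE -unitmxE.
- by rewrite hPQ.
split.
- by rewrite -mulmxA hPQ.
- rewrite {1}hZ -hPQ -!mulmxA (mulmxA Q P) (mulmxA (\adj _)) mul_adj_mx mul_scalar_mx.
  by rewrite -scalemxAr !mulmxA hPQ -hZ.
- rewrite {1}hZ' -hPQ -!mulmxA (mulmxA Q P) (mulmxA (Q *m P)) mul_mx_adj mul_scalar_mx.
  by rewrite -!scalemxAr hPQ -hZ'.
Qed.

Lemma col_mul (R : comPzRingType) a b c (A : 'M[R]_(a, b)) (B : 'M[R]_(b, c)) j :
  col j (A *m B) = A *m col j B.
Proof. by rewrite !colE mulmxA. Qed.

Theorem theorem4p9 (C : numClosedFieldType) (n m : nat)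
  (A : 'M[C]_n) (B : 'M[C]_m) (D : 'M[C]_(n, m))
  (k1 k2 r1 r2 : nat)
  (hk1 : mx_index A k1) (hk2 : mx_index B k2)
  (hr1 : \rank (A ^+ k1) = r1) (hr2 : \rank (B ^+ k2) = r2) :
  let Dt := A ^+ k1 *m D *m B ^+ k2 in
  let dB := fun j : 'I_m => \col_(l < n)
      \sum_(a : {set 'I_m} | (#|a| == r2) && (j \in a))
         pminor (rowrep (B ^+ k2.+1) j (row l Dt)) a in
  let dA := fun i : 'I_n => \row_(t < m)
      \sum_(b : {set 'I_n} | (#|b| == r1) && (i \in b))
         pminor (colrep (A ^+ k1.+1) i (col t Dt)) b in
  let den := (\sum_(b : {set 'I_n} | #|b| == r1) pminor (A ^+ k1.+1) b) *
             (\sum_(a : {set 'I_m} | #|a| == r2) pminor (B ^+ k2.+1) a) in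
  let X := drazin A *m D *m drazin B in
  forall (i : 'I_n) (j : 'I_m),
    X i j = (\sum_(b : {set 'I_n} | (#|b| == r1) && (i \in b))
               pminor (colrep (A ^+ k1.+1) i (dB j)) b) / den /\
    X i j = (\sum_(a : {set 'I_m} | (#|a| == r2) && (j \in a))
               pminor (rowrep (B ^+ k2.+1) j (dA i)) a) / den.
Proof.
move=> Dt dB dA den X i j.
have [rA [PA [QA [hMA hrA hdA hkA [hkA' hPA1 hPA2]]]]] := side hk1.
have [rB [PB [QB [hMB hrB hdB hkB [hkB' hPB1 hPB2]]]]] := side hk2.
have e1 : r1 = rA by rewrite -hr1 -hrA hk1.1.
have e2 : r2 = rB by rewrite -hr2 -hrB hk2.1.
clear hr1 hr2; subst r1 r2.
set XA := drazin A in hkA hkA' hPA1 hPA2 X *.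
set XB := drazin B in hkB hkB' hPB1 hPB2 X *.
set YA := QA *m PA in hdA hPA1 hPA2.
set YB := QB *m PB in hdB hPB1 hPB2.
pose Big := PA *m \adj YA *m QA *m XA *m D *m XB *m PB *m \adj YB *m QB.
have hBig : Big = (\det YA * \det YB) *: X.
  rewrite /Big hPA1 -!mulmxA (mulmxA XB) (mulmxA (XB *m PB)) hPB2.
  rewrite -!scalemxAr -scalemxAl scalerA mulrC /X !mulmxA.
  by [].
have hden : den = \det YA * \det YB.
  by rewrite /den hMA hMB -!cauchy_binet.
have hden0 : den != 0 by rewrite hden mulf_neq0.
have hX : X i j = Big i j / den.
  by rewrite hBig -hden [in RHS]mxE mulrC mulrA mulVf // mul1r.
split; rewrite hX; congr (_ / _).
- have hdBj : dB j = PA *m col j (QA *m XA *m D *m XB *m PB *m \adj YB *m QB).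
    rewrite -col_mul !mulmxA -hkA.
    apply/matrixP => l c; rewrite !mxE.
    have -> : row l Dt = row l (A ^+ k1 *m D *m XB *m PB) *m QB.
      by rewrite /Dt hkB' -row_mul !mulmxA.
    rewrite hMB lemFr -!row_mul mxE.
    by rewrite mxE.
  rewrite hdBj hMA lemF -col_mul [in LHS]mxE /Big !mulmxA.
  by rewrite [RHS]mxE [RHS]mxE.
- have hdAi : dA i = row i (PA *m \adj YA *m QA *m XA *m D *m XB *m PB) *m QB.
    rewrite -row_mul -!mulmxA (mulmxA XB PB QB) -hkB' !mulmxA.
    apply/matrixP => c t; rewrite /dA [LHS]mxE [RHS]mxE.
    have -> : col t Dt = PA *m col t (QA *m XA *m D *m B ^+ k2).
      by rewrite /Dt -col_mul !mulmxA -hkA.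
    rewrite hMA lemF -col_mul [LHS]mxE.
    by rewrite !mulmxA.
  by rewrite hdAi hMB lemFr -!row_mul [RHS]mxE.
Qed.
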